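(* Let $\alpha\ge0$ satisfy $\alpha^2+\alpha V^0-\gamma<0$, let $u_0\in C_\alpha$, and let $(s,u)$ be the solution of the free-interface problem with initial data $u_0$. Then for all $t>0$ $$|T_2(t)u_0|_\alpha\le 2\exp[(-\gamma+\alpha^2+\alpha V^0)t]\,|u_0|_\alpha .$$
   Context: Fix $\gamma>0$, $0<v_0\le V^0$. The kinetics $g:[0,\infty)\to\mathbb{R}$ is monotonically decreasing, differentiable, $|g'|\le C$, $-V^0\le g\le -v_0$. Free-interface problem: find $s(t)$, $s(0)=0$, and $u(x,t)$ with $u_t=u_{xx}-\gamma u$ for $x\ne s(t)$, $t>0$; $u(x,0)=u_0(x)$; $g(u(s(t),t))=v(t)$; $u_x^+(s(t),t)-u_x^-(s(t),t)=v(t)$, with $v=s'$, $u_x^\pm$ one-sided derivatives from right/left, $u\to0$ at $\pm\infty$; the classical solution exists and is unique, and $-V^0\le v(t)\le -v_0$. With $G(x,t,\xi,\tau)=[4\pi(t-\tau)]^{-1/2}\exp\{-(x-\xi)^2/(4(t-\tau))\}$, define $(T_2(t)u_0)(x)=e^{-\gamma t}\int_{-\infty}^{\infty}G(x,t,\xi,0)u_0(\xi)d\xi$. Weighted norms: $|f|_\alpha=\sup_x e^{\alpha|x|}|f(x)|$, $C_\alpha=\{f\in C(\mathbb{R}):|f|_\alpha<\infty\}$; for a function $f(\cdot,t)$ at time $t$ associated with the solution (such as $T_2(t)u_0$), $|f(\cdot,t)|_\alpha:=\sup_x e^{\alpha|x-s(t)|}|f(x,t)|$ (weight centred at the interface),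 while $|u_0|_\alpha$ uses the weight centred at $0$. *)

(* Defs.v *)
From Stdlib Require Import Reals Lra.
From Coquelicot Require Import Coquelicot.
Open Scope R_scope.

Definition G (x t xi tau : R) : R :=
  / sqrt (4 * PI * (t - tau)) * exp (- (x - xi) ^ 2 / (4 * (t - tau))).

Definition T2 (gamma : R) (u0 : R -> R) (t x : R) : R :=
  exp (- gamma * t) *
  RInt_gen (fun xi => G x t xi 0 * u0 xi) (Rbar_locally m_infty) (Rbar_locally p_infty).

Definition wnorm (alpha c : R) (f : R -> R) : Rbar :=
  Lub_Rbar (fun y => exists x, y = exp (alpha * Rabs (x - c)) * Rabs (f x)).

Definition in_C (alpha : R) (f : R -> R) : Prop :=
  (forall x, continuous f x) /\ is_finite (wnorm alpha 0 f).

Definition kinetics (v0 V0 C : R) (g : R -> R) : Prop :=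
  (forall x y, 0 <= x -> x <= y -> g y <= g x) /\
  (forall x, 0 <= x -> ex_derive g x /\ Rabs (Derive g x) <= C) /\
  (forall x, 0 <= x -> - V0 <= g x <= - v0).

(* Classical solution (s, u) of the free-interface problem;
   u x t is the value at position x, time t;  v = s'. *)
Definition free_interface_solution (gamma : R) (g u0 : R -> R)
    (s : R -> R) (u : R -> R -> R) : Prop :=
  s 0 = 0 /\
  filterlim s (at_right 0) (locally 0) /\
  (forall t, 0 < t -> ex_derive s t) /\
  (forall x t, 0 <= t ->
     filterlim (fun p : R * R => u (fst p) (snd p))
       (within (fun p : R * R => 0 <= snd p) (locally (x, t))) (locally (u x t))) /\
  (forall x, u x 0 = u0 x) /\
  (forall x t, 0 < t -> x <> s t ->
     ex_derive (fun tau => u x tau) t /\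
     ex_derive_n (fun y => u y t) 2 x /\
     Derive (fun tau => u x tau) t = Derive_n (fun y => u y t) 2 x - gamma * u x t) /\
  (forall t, 0 < t -> 0 <= u (s t) t /\ g (u (s t) t) = Derive s t) /\
  (forall t, 0 < t -> exists dp dm : R,
     filterlim (fun h => (u (s t + h) t - u (s t) t) / h) (at_right 0) (locally dp) /\
     filterlim (fun h => (u (s t + h) t - u (s t) t) / h) (at_left 0) (locally dm) /\
     dp - dm = Derive s t) /\
  (forall t, 0 < t ->
     filterlim (fun x => u x t) (Rbar_locally p_infty) (locally 0) /\
     filterlim (fun x => u x t) (Rbar_locally m_infty) (locally 0)).

(* Main.v *)
Require Import Defs.
From Stdlib Require Import Reals Lra.
From Coquelicot Require Import Coquelicot.
Open Scope R_scope.

Lemma RInt_dom (f h H : R -> R) :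
  (forall x, continuous f x) -> (forall x, Rabs (f x) <= h x) ->
  (forall x, is_derive H x (h x)) -> (forall x, continuous h x) ->
  forall p q, Rabs (RInt f p q) <= Rabs (H q - H p).
Proof.
  intros cf fh dH ch.
  assert (key : forall p q, p <= q -> Rabs (RInt f p q) <= H q - H p).
  { intros p q pq.
    assert (Hi : is_RInt h p q (minus (H q) (H p))).
    { apply (is_RInt_derive (V := R_CompleteNormedModule)); intros; auto. }
    eapply Rle_trans. apply abs_RInt_le; auto.
    apply (ex_RInt_continuous (V := R_CompleteNormedModule)); intros; auto.
    replace (H q - H p) with (RInt h p q).
    apply RInt_le; auto.
    apply (ex_RInt_continuous (V := R_CompleteNormedModule)); intros. apply continuous_comp; auto. apply continuous_Rabs.
    eexists; eauto.
    intros; auto.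
    apply is_RInt_unique; auto. }
  intros p q. destruct (Rle_dec p q) as [pq|pq].
  - eapply Rle_trans. apply key; auto. apply Rle_abs.
  - rewrite <- opp_RInt_swap. 2: apply (ex_RInt_continuous (V := R_CompleteNormedModule)); intros; auto.
    change (Rabs (- RInt f q p) <= Rabs (H q - H p)).
    rewrite Rabs_Ropp. eapply Rle_trans. apply key; lra.
    rewrite <- Rabs_Ropp. replace (- (H q - H p)) with (H p - H q) by ring. apply Rle_abs.
Qed.

Lemma RInt_gen_dom (f h H : R -> R) (Lm Lp : R) :
  (forall x, continuous f x) -> (forall x, Rabs (f x) <= h x) ->
  (forall x, is_derive H x (h x)) -> (forall x, continuous h x) ->
  filterlim H (Rbar_locally p_infty) (locally Lp) ->
  filterlim H (Rbar_locally m_infty) (locally Lm) ->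
  Rabs (RInt_gen f (Rbar_locally m_infty) (Rbar_locally p_infty)) <= Lp - Lm.
Proof.
  intros cf fh dH ch Hp Hm.
  assert (exf : forall a b, ex_RInt f a b).
  { intros; apply (ex_RInt_continuous (V := R_CompleteNormedModule)); intros; auto. }
  assert (FP : ProperFilter (filter_prod (Rbar_locally m_infty) (Rbar_locally p_infty))).
  { apply filter_prod_proper; apply Rbar_locally_filter. }
  destruct (proj1 (filterlim_locally_cauchy (F := filter_prod (Rbar_locally m_infty) (Rbar_locally p_infty))
     (fun ab => RInt f (fst ab) (snd ab)))) as [l Hl].
  { intros eps.
    assert (e4 : 0 < eps / 4) by (destruct eps; simpl; lra).
    pose proof (proj1 (filterlim_locally H Lp) Hp (mkposreal _ e4)) as Q2.
    pose proof (proj1 (filterlim_locally H Lm) Hm (mkposreal _ e4)) as Q1.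
    exists (fun ab => ball Lm (eps/4) (H (fst ab)) /\ ball Lp (eps/4) (H (snd ab))).
    split.
    - apply Filter_prod with (1 := Q1) (2 := Q2). intros; simpl; auto.
    - intros [a b] [a' b'] [Ha Hb] [Ha' Hb']; simpl in *.
      change (Rabs (RInt f a' b' - RInt f a b) < eps).
      rewrite <- (RInt_Chasles f a' a b'), <- (RInt_Chasles f a b b'); auto.
      change (Rabs (RInt f a' a + (RInt f a b + RInt f b b') - RInt f a b) < eps).
      replace (RInt f a' a + (RInt f a b + RInt f b b') - RInt f a b)
        with (RInt f a' a + RInt f b b') by ring.
      pose proof (RInt_dom f h H cf fh dH ch a' a).
      pose proof (RInt_dom f h H cf fh dH ch b b').
      change (Rabs (H a - Lm) < eps/4) in Ha.
      change (Rabs (H b - Lp) < eps/4) in Hb.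
      change (Rabs (H a' - Lm) < eps/4) in Ha'.
      change (Rabs (H b' - Lp) < eps/4) in Hb'.
      eapply Rle_lt_trans. apply Rabs_triang.
      revert Ha Hb Ha' Hb' H0 H1.
      unfold Rabs; repeat destruct Rcase_abs; intros; lra. }
  assert (Hi : is_RInt_gen f (Rbar_locally m_infty) (Rbar_locally p_infty) l).
  { intros P HP. apply Hl in HP. unfold filtermapi. simpl.
    eapply filter_imp; [| exact HP]. intros ab Pab. simpl in Pab.
    exists (RInt f (fst ab) (snd ab)). split; auto. apply (RInt_correct (V := R_CompleteNormedModule)); auto. }
  rewrite (is_RInt_gen_unique f l Hi).
  assert (Hh : is_RInt_gen h (Rbar_locally m_infty) (Rbar_locally p_infty) (Lp - Lm)).
  { apply is_RInt_gen_ext with (f := Derive H).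
    - apply Filter_prod with (Q := fun _ => True) (R := fun _ => True); try apply filter_true.
      intros; apply is_derive_unique; auto.
    - apply is_RInt_gen_Derive.
      + apply Filter_prod with (Q := fun _ => True) (R := fun _ => True); try apply filter_true.
        intros; eexists; eauto.
      + apply Filter_prod with (Q := fun _ => True) (R := fun _ => True); try apply filter_true.
        intros. apply continuous_ext with h. intros; symmetry; apply is_derive_unique; auto. auto.
      + auto.
      + auto. }
  apply (RInt_gen_norm (Fa := Rbar_locally m_infty) (Fb := Rbar_locally p_infty) f h l (Lp - Lm)); auto.
  - apply Filter_prod with (Q := fun a => a < 0) (R := fun b => 0 < b).
    simpl; exists 0; auto. simpl; exists 0; auto. intros; simpl; lra.
  - apply Filter_prod with (Q := fun _ => True) (R := fun _ => True); try apply filter_true.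
    intros; apply fh.
Qed.

Lemma atan_small (e : R) : 0 < e -> exists d, 0 < d /\ forall z, Rabs z < d -> Rabs (atan z) < e.
Proof.
  intros he.
  pose proof (continuous_atan 0) as C.
  destruct (proj1 (filterlim_locally atan (atan 0)) C (mkposreal e he)) as [d Hd].
  exists d. split. apply cond_pos. intros z Hz.
  specialize (Hd z). rewrite atan_0 in Hd. 
  assert (B : ball 0 d z). { change (Rabs (z - 0) < d). rewrite Rminus_0_r. exact Hz. }
  specialize (Hd B). change (Rabs (atan z - 0) < e) in Hd. rewrite Rminus_0_r in Hd. exact Hd.
Qed.

Lemma atan_lim (A k c : R) : 0 < k ->
 filterlim (fun y => A * atan ((y - c)/k)) (Rbar_locally p_infty) (locally (A*(PI/2))) /\
 filterlim (fun y => A * atan ((y - c)/k)) (Rbar_locally m_infty) (locally (- (A*(PI/2)))).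
Proof.
  intros hk. split; apply filterlim_locally; intros eps.
  - destruct (atan_small (eps / (Rabs A + 1))) as [d [hd Hd]].
    { apply Rdiv_lt_0_compat. destruct eps; simpl; lra. pose proof (Rabs_pos A); lra. }
    simpl. exists (c + k / d). intros y Hy.
    change (Rabs (A * atan ((y - c)/k) - A * (PI/2)) < eps).
    set (z := (y - c) / k).
    assert (z > / d).
    { unfold z. apply Rmult_lt_reg_r with k; auto. unfold Rdiv. rewrite Rmult_assoc, Rinv_l by lra.
      assert (k / d < y - c) by lra. unfold Rdiv in H. lra. }
    assert (zp : 0 < z). { pose proof (Rinv_0_lt_compat d hd); lra. }
    assert (atan z = PI/2 - atan (/ z)) by (rewrite atan_inv; auto; ring).
    rewrite H0. replace (A * (PI / 2 - atan (/ z)) - A * (PI / 2)) with (- (A * atan (/ z))) by ring.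
    rewrite Rabs_Ropp, Rabs_mult.
    assert (Rabs (/ z) < d).
    { rewrite Rabs_right. 2: left; apply Rinv_0_lt_compat; auto.
      rewrite <- (Rinv_inv d). apply Rinv_lt_contravar; auto. apply Rmult_lt_0_compat; auto.
      apply Rinv_0_lt_compat; auto. }
    specialize (Hd _ H1).
    assert (Rabs A * Rabs (atan (/ z)) <= Rabs A * (eps / (Rabs A + 1))).
    { apply Rmult_le_compat_l. apply Rabs_pos. lra. }
    eapply Rle_lt_trans. exact H2.
    destruct eps as [e he]; simpl in *.
    pose proof (Rabs_pos A).
    apply Rmult_lt_reg_r with (Rabs A + 1). lra.
    replace (Rabs A * (e / (Rabs A + 1)) * (Rabs A + 1)) with (Rabs A * e) by (field; lra). nra.
  - destruct (atan_small (eps / (Rabs A + 1))) as [d [hd Hd]].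
    { apply Rdiv_lt_0_compat. destruct eps; simpl; lra. pose proof (Rabs_pos A); lra. }
    simpl. exists (c - k / d). intros y Hy.
    change (Rabs (A * atan ((y - c)/k) - - (A * (PI/2))) < eps).
    set (z := - ((y - c) / k)).
    replace ((y - c) / k) with (- z) by (unfold z; ring).
    assert (z > / d).
    { unfold z. apply Rmult_lt_reg_r with k; auto. unfold Rdiv. 
      replace (- ((y - c) * / k) * k) with (- (y - c)) by (field; lra).
      assert (k / d < c - y) by lra. unfold Rdiv in H. lra. }
    assert (zp : 0 < z). { pose proof (Rinv_0_lt_compat d hd); lra. }
    rewrite atan_opp.
    assert (atan z = PI/2 - atan (/ z)) by (rewrite atan_inv; auto; ring).
    rewrite H0. replace (A * - (PI / 2 - atan (/ z)) - - (A * (PI / 2))) with (A * atan (/ z)) by ring.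
    rewrite Rabs_mult.
    assert (Rabs (/ z) < d).
    { rewrite Rabs_right. 2: left; apply Rinv_0_lt_compat; auto.
      rewrite <- (Rinv_inv d). apply Rinv_lt_contravar; auto. apply Rmult_lt_0_compat; auto.
      apply Rinv_0_lt_compat; auto. }
    specialize (Hd _ H1).
    assert (Rabs A * Rabs (atan (/ z)) <= Rabs A * (eps / (Rabs A + 1))).
    { apply Rmult_le_compat_l. apply Rabs_pos. lra. }
    eapply Rle_lt_trans. exact H2.
    destruct eps as [e he]; simpl in *.
    pose proof (Rabs_pos A).
    apply Rmult_lt_reg_r with (Rabs A + 1). lra.
    replace (Rabs A * (e / (Rabs A + 1)) * (Rabs A + 1)) with (Rabs A * e) by (field; lra). nra.
Qed.

Lemma exp_quad_bound (x xi t alpha sg c : R) : 0 < t -> 0 <= alpha ->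
  sg * x = Rabs x -> sg * sg = 1 -> c = x - 2 * sg * alpha * t ->
  -(x - xi)^2 / (4 * t) - alpha * Rabs xi <= alpha^2 * t - alpha * Rabs x - (xi - c)^2 / (4 * t).
Proof.
  intros ht ha hs hs2 hc.
  assert (sg * xi <= Rabs xi).
  { destruct (Rle_dec 0 sg).
    - assert (sg = 1) by nra. subst. rewrite Rmult_1_l. apply Rle_abs.
    - assert (sg = -1) by nra. rewrite H. replace (-1 * xi) with (- xi) by ring.
      rewrite <- Rabs_Ropp. apply Rle_abs. }
  assert (E : (xi - c)^2 = (x - xi)^2 - 4 * sg * alpha * t * (x - xi) + 4 * alpha^2 * t^2).
  { subst c. replace (xi - (x - 2 * sg * alpha * t)) with (-(x - xi) + 2 * sg * alpha * t) by ring.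
    replace ((-(x - xi) + 2 * sg * alpha * t)^2) with ((x-xi)^2 - 4 * sg * alpha * t * (x - xi) + 4 * (sg * sg) * alpha^2 * t^2) by ring.
    rewrite hs2. ring. }
  rewrite E.
  unfold Rdiv.
  replace ((x - xi) ^ 2 - 4 * sg * alpha * t * (x - xi) + 4 * alpha ^ 2 * t ^ 2) with
    ((x - xi) ^ 2 + 4 * t * ( - sg * alpha * (x - xi) + alpha ^ 2 * t)) by ring.
  rewrite Rmult_plus_distr_r.
  replace (4 * t * (- sg * alpha * (x - xi) + alpha ^ 2 * t) * / (4 * t)) with
     (- sg * alpha * (x - xi) + alpha ^ 2 * t) by (field; lra).
  assert (alpha * (sg * xi) <= alpha * Rabs xi) by (apply Rmult_le_compat_l; auto).
  replace (- sg * alpha * (x - xi)) with (- alpha * (sg * x) + alpha * (sg * xi)) by ring.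
  rewrite hs. lra.
Qed.

Lemma exp_le_mono (a b : R) : a <= b -> exp a <= exp b.
Proof. intros [h|h]. left; apply exp_increasing; auto. subst; right; auto. Qed.

Lemma exp_neg_sq (z : R) : exp (- z^2) <= / (1 + z^2).
Proof.
  rewrite exp_Ropp. apply Rinv_le_contravar. nra. apply exp_ineq1_le.
Qed.

Lemma I_bound (x t alpha M : R) (u0 : R -> R) : 0 < t -> 0 <= alpha -> 0 <= M ->
  (forall xi, continuous u0 xi) -> (forall xi, exp (alpha * Rabs xi) * Rabs (u0 xi) <= M) ->
  Rabs (RInt_gen (fun xi => G x t xi 0 * u0 xi) (Rbar_locally m_infty) (Rbar_locally p_infty))
   <= sqrt PI * (M * exp (alpha^2 * t) * exp (- (alpha * Rabs x))).
Proof.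
  intros ht ha hM cu bu.
  set (k := sqrt (4 * t)).
  assert (hk : 0 < k) by (apply sqrt_lt_R0; lra).
  assert (hk2 : k * k = 4 * t) by (apply sqrt_sqrt; lra).
  assert (hP : 0 < sqrt PI) by (apply sqrt_lt_R0; apply PI_RGT_0).
  assert (hP2 : sqrt PI * sqrt PI = PI) by (apply sqrt_sqrt; pose proof PI_RGT_0; lra).
  set (sg := if Rle_dec 0 x then 1 else -1).
  assert (hs : sg * x = Rabs x).
  { unfold sg; destruct Rle_dec. rewrite Rabs_right; lra. rewrite Rabs_left; lra. }
  assert (hs2 : sg * sg = 1) by (unfold sg; destruct Rle_dec; lra).
  set (c := x - 2 * sg * alpha * t).
  set (E := M * exp (alpha^2 * t) * exp (- (alpha * Rabs x))).
  assert (hE : 0 <= E).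
  { unfold E. apply Rmult_le_pos. apply Rmult_le_pos; auto. left; apply exp_pos. left; apply exp_pos. }
  set (A := E / (sqrt PI * k)).
  destruct (atan_lim (A * k) k c hk) as [Lp Lm].
  eapply Rle_trans.
  apply (RInt_gen_dom _ (fun xi => A / (1 + ((xi - c)/k)^2)) (fun y => A * k * atan ((y - c)/k)) (- (A * k * (PI / 2))) (A * k * (PI / 2))); auto.
  - intros xi. apply (continuous_mult (U:=R_UniformSpace) (K:=R_AbsRing) (fun xi => G x t xi 0) u0). 2: apply cu.
    unfold G. apply (ex_derive_continuous (K:=R_AbsRing) (V:=R_NormedModule)). auto_derive. lra.
  - intros xi. unfold G. rewrite Rminus_0_r.
    assert (sq : sqrt (4 * PI * t) = sqrt PI * k).
    { unfold k. rewrite <- sqrt_mult. f_equal; ring. pose proof PI_RGT_0; lra. lra. }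
    rewrite sq.
    assert (hu : Rabs (u0 xi) <= M * exp (- (alpha * Rabs xi))).
    { rewrite exp_Ropp. pose proof (bu xi). pose proof (exp_pos (alpha * Rabs xi)).
      apply Rmult_le_reg_l with (exp (alpha * Rabs xi)); auto.
      replace (exp (alpha * Rabs xi) * (M * / exp (alpha * Rabs xi))) with M by (field; lra). lra. }
    set (z := (xi - c) / k).
    assert (hz : z ^ 2 = (xi - c)^2 / (4 * t)).
    { unfold z. rewrite <- hk2. field. lra. }
    assert (key : exp (- (x - xi) ^ 2 / (4 * t)) * exp (- (alpha * Rabs xi)) <=
                  exp (alpha ^ 2 * t) * exp (- (alpha * Rabs x)) * / (1 + z ^ 2)).
    { rewrite <- exp_plus.
      eapply Rle_trans.
      { apply exp_le_mono. 
        pose proof (exp_quad_bound x xi t alpha sg c ht ha hs hs2 eq_refl). 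
        replace (- (x - xi) ^ 2 / (4 * t) + - (alpha * Rabs xi)) with
          (- (x - xi) ^ 2 / (4 * t) - alpha * Rabs xi) by ring. exact H. }
      rewrite <- hz.
      replace (alpha ^ 2 * t - alpha * Rabs x - z ^ 2) with ((alpha ^ 2 * t + - (alpha * Rabs x)) + - z^2) by ring.
      rewrite !exp_plus. apply Rmult_le_compat_l. left; apply Rmult_lt_0_compat; apply exp_pos. apply exp_neg_sq. }
    rewrite !Rabs_mult.
    rewrite (Rabs_right (/ (sqrt PI * k))). 2: left; apply Rinv_0_lt_compat; nra.
    rewrite (Rabs_right (exp _)). 2: left; apply exp_pos.
    unfold A, E.
    assert (hi : 0 < / (sqrt PI * k)) by (apply Rinv_0_lt_compat; nra).
    assert (0 < exp (- (x - xi) ^ 2 / (4 * t))) by apply exp_pos.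
    apply Rle_trans with (/ (sqrt PI * k) * exp (- (x - xi) ^ 2 / (4 * t)) * (M * exp (- (alpha * Rabs xi)))).
    { apply Rmult_le_compat_l. nra. exact hu. }
    apply Rle_trans with (/ (sqrt PI * k) * M * (exp (alpha ^ 2 * t) * exp (- (alpha * Rabs x)) * / (1 + z ^ 2))).
    { replace (/ (sqrt PI * k) * exp (- (x - xi) ^ 2 / (4 * t)) * (M * exp (- (alpha * Rabs xi))))
        with (/ (sqrt PI * k) * M * (exp (- (x - xi) ^ 2 / (4 * t)) * exp (- (alpha * Rabs xi)))) by ring.
      apply Rmult_le_compat_l. nra. exact key. }
    right. unfold Rdiv. ring.
  - intros xi. auto_derive. auto. field. split. lra. pose proof (pow2_ge_0 (xi - c)). nra.
  - intros xi. apply (ex_derive_continuous (K:=R_AbsRing) (V:=R_NormedModule)). auto_derive.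
    pose proof (pow2_ge_0 ((xi - c) / k)). 
    replace ((xi + - c) * / k * ((xi + - c) * / k * 1)) with (((xi - c)/k)^2) by (field; lra). lra.
  - right. unfold A. set (sP := sqrt PI) in *. rewrite <- hP2. field. split; lra.
Qed.

Lemma s_bound (gamma v0 V0 C : R) (g u0 s : R -> R) (u : R -> R -> R) (t : R) :
  0 <= v0 -> 0 <= V0 -> kinetics v0 V0 C g -> free_interface_solution gamma g u0 s u -> 0 < t ->
  Rabs (s t) <= V0 * t.
Proof.
  intros hv hV [_ [_ kg]] [s0 [slim [sder [_ [_ [_ [kin _]]]]]]] ht.
  assert (mv : forall e, 0 < e < t -> Rabs (s t - s e) <= V0 * (t - e)).
  { intros e he.
    destruct (MVT_gen s e t (Derive s)) as [c [hc eq]].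
    - intros x hx. rewrite Rmin_left in hx by lra. rewrite Rmax_right in hx by lra.
      apply Derive_correct. apply sder. lra.
    - intros x hx. rewrite Rmin_left in hx by lra. rewrite Rmax_right in hx by lra.
      apply continuity_pt_filterlim. apply (ex_derive_continuous (K:=R_AbsRing) (V:=R_NormedModule)). apply sder. lra.
    - rewrite Rmin_left in hc by lra. rewrite Rmax_right in hc by lra.
      rewrite eq. destruct (kin c) as [hu hg]. lra.
      rewrite <- hg. destruct (kg _ hu) as [g1 g2].
      rewrite Rabs_mult. rewrite (Rabs_right (t - e)) by lra.
      apply Rmult_le_compat_r. lra.
      unfold Rabs; destruct Rcase_abs; lra. }
  destruct (Rle_dec (Rabs (s t)) (V0 * t)) as [ok|nok]; auto.
  exfalso.
  assert (hd : 0 < Rabs (s t) - V0 * t) by lra.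
  pose proof (proj1 (filterlim_locally s 0) slim (mkposreal _ hd)) as Hs.
  destruct Hs as [d Hd]. simpl in Hd.
  set (e := Rmin (d/2) (t/2)).
  assert (he : 0 < e < t).
  { unfold e. pose proof (cond_pos d). split. apply Rmin_glb_lt; lra.
    eapply Rle_lt_trans. apply Rmin_r. lra. }
  assert (hb : ball 0 d e).
  { change (Rabs (e - 0) < d). rewrite Rminus_0_r. rewrite Rabs_right by lra.
    unfold e. eapply Rle_lt_trans. apply Rmin_l. pose proof (cond_pos d). lra. }
  specialize (Hd e hb (proj1 he)).
  change (Rabs (s e - 0) < Rabs (s t) - V0 * t) in Hd. rewrite Rminus_0_r in Hd.
  specialize (mv e he).
  assert (Rabs (s t) <= Rabs (s t - s e) + Rabs (s e)).
  { replace (s t) with ((s t - s e) + s e) at 1 by ring. apply Rabs_triang. }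
  nra.
Qed.

Theorem mainTheorem3 (gamma v0 V0 C : R) (g : R -> R) (alpha : R)
    (u0 : R -> R) (s : R -> R) (u : R -> R -> R) :
  0 < gamma -> 0 < v0 -> v0 <= V0 ->
  kinetics v0 V0 C g ->
  0 <= alpha -> alpha ^ 2 + alpha * V0 - gamma < 0 ->
  in_C alpha u0 ->
  free_interface_solution gamma g u0 s u ->
  forall t, 0 < t ->
    Rbar_le (wnorm alpha (s t) (T2 gamma u0 t))
      (Finite (2 * exp ((- gamma + alpha ^ 2 + alpha * V0) * t)
                 * real (wnorm alpha 0 u0))).
Proof.
  intros hg hv0 hV kin ha hcond [cu fin] sol t ht.
  pose proof (s_bound gamma v0 V0 C g u0 s u t ltac:(lra) ltac:(lra) kin sol ht) as sb.
  set (M := real (wnorm alpha 0 u0)).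
  assert (bu : forall xi, exp (alpha * Rabs xi) * Rabs (u0 xi) <= M).
  { intros xi. destruct (Lub_Rbar_correct (fun y => exists x, y = exp (alpha * Rabs (x - 0)) * Rabs (u0 x))) as [ub _].
    specialize (ub (exp (alpha * Rabs xi) * Rabs (u0 xi))).
    assert (hw : Rbar_le (exp (alpha * Rabs xi) * Rabs (u0 xi)) (wnorm alpha 0 u0)).
    { apply ub. exists xi. rewrite Rminus_0_r. auto. }
    unfold M. rewrite <- fin in hw. simpl in hw. exact hw. }
  assert (hM : 0 <= M).
  { eapply Rle_trans. 2: apply (bu 0). apply Rmult_le_pos. left; apply exp_pos. apply Rabs_pos. }
  unfold wnorm.
  destruct (Lub_Rbar_correct (fun y => exists x, y = exp (alpha * Rabs (x - s t)) * Rabs (T2 gamma u0 t x))) as [_ lub].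
  apply lub. intros y [x ->]. simpl.
  unfold T2. rewrite Rabs_mult. rewrite (Rabs_right (exp _)) by (left; apply exp_pos).
  pose proof (I_bound x t alpha M u0 ht ha hM cu bu) as hI.
  set (I := RInt_gen _ _ _) in *.
  assert (hx : exp (alpha * Rabs (x - s t)) <= exp (alpha * Rabs x + alpha * V0 * t)).
  { apply exp_le_mono.
    assert (Rabs (x - s t) <= Rabs x + Rabs (s t)).
    { unfold Rminus. eapply Rle_trans. apply Rabs_triang. rewrite Rabs_Ropp. lra. }
    nra. }
  assert (sP : sqrt PI <= 2).
  { replace 2 with (sqrt (2 * 2)). apply sqrt_le_1_alt. pose proof PI_4. lra.
    apply sqrt_square. lra. }
  set (a := alpha * Rabs x) in *.
  assert (eqe : exp ((- gamma + alpha ^ 2 + alpha * V0) * t) =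
     exp (a + alpha * V0 * t) * exp (- gamma * t) * exp (alpha ^ 2 * t) * exp (- a)).
  { rewrite <- !exp_plus. f_equal. ring. }
  replace ((- gamma + alpha * (alpha * 1) + alpha * V0) * t) with ((- gamma + alpha ^ 2 + alpha * V0) * t) by ring.
  rewrite eqe.
  pose proof (exp_pos (a + alpha * V0 * t)). pose proof (exp_pos (- gamma * t)).
  pose proof (exp_pos (alpha ^ 2 * t)). pose proof (exp_pos (- a)).
  pose proof (exp_pos (alpha * Rabs (x - s t))).
  pose proof (Rabs_pos I).
  apply Rle_trans with (exp (a + alpha * V0 * t) * (exp (- gamma * t) * Rabs I)).
  { apply Rmult_le_compat_r. nra. exact hx. }
  apply Rle_trans with (exp (a + alpha * V0 * t) * (exp (- gamma * t) * (sqrt PI * (M * exp (alpha ^ 2 * t) * exp (- a))))).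
  { apply Rmult_le_compat_l. lra. apply Rmult_le_compat_l. lra. exact hI. }
  set (P := exp (a + alpha * V0 * t) * exp (- gamma * t) * exp (alpha ^ 2 * t) * exp (- a)).
  assert (0 <= P) by (unfold P; repeat apply Rmult_le_pos; lra).
  replace (exp (a + alpha * V0 * t) * (exp (- gamma * t) * (sqrt PI * (M * exp (alpha ^ 2 * t) * exp (- a)))))
    with (sqrt PI * (P * M)) by (unfold P; ring).
  replace (2 * P * M) with (2 * (P * M)) by ring.
  apply Rmult_le_compat_r. apply Rmult_le_pos; auto. exact sP.
Qed.
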